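(* Let $T\in\mathfrak{sl}_3(\mathbb R)$, $\mathbf Q\in\mathbb R^3$, $\mathbf p\in(\mathbb R^3)^*$, and let $X^{\mathrm{roll}}$ be the vector field on $S^2\times S^3$ induced by $\rho(T,\mathbf Q,\mathbf p)$. Then $X^{\mathrm{roll}}$ descends to a vector field on $S^2\times\mathrm{SO}_3$ under the double cover $S^2\times S^3\to S^2\times\mathrm{SO}_3$, $(\mathbf v,q)\mapsto(\mathbf v,\mathbf x\mapsto q\mathbf x\bar q)$, if and only if $T^t=-T$ and $\mathbf Q=-\mathbf p$ (identifying $\mathbb R^3$ and $(\mathbb R^3)^*$ via the Euclidean inner product).
   Context: $\mathrm{Im}(\mathbb O)$ is the space of matrices $\begin{pmatrix}x&\mathbf A\\ \mathbf b&-x\end{pmatrix}$, $x\in\mathbb R$, $\mathbf A\in\mathbb R^3$ column, $\mathbf b\in(\mathbb R^3)^*$ row. Vector products: for $\mathbf A,\mathbf A'\in\mathbb R^3$, $\mathbf A\times\mathbf A'=\det(\mathbf A,\mathbf A',\cdot)\in(\mathbb R^3)^*$; for $\mathbf b,\mathbf b'\in(\mathbb R^3)^*$, $\mathbf b\times\mathbf b'=\det(\mathbf b,\mathbf b',\cdot)\in\mathbb R^3$. The linear map $\rho(T,\mathbf Q,\mathbf p)$ on $\mathrm{Im}(\mathbb O)$ is $\begin{pmatrix}x&\mathbf A\\ \mathbf b&-x\end{pmatrix}\mapsto\begin{pmatrix}\mathbf p\mathbf A+\mathbf b\mathbf Q&T\mathbf A-\mathbf p\times\mathbf b+2\mathbf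 Qx\\ \mathbf Q\times\mathbf A-\mathbf bT+2\mathbf px&-\mathbf p\mathbf A-\mathbf b\mathbf Q\end{pmatrix}$; viewed as a linear vector field, it is tangent to the null cone $C=\{-x^2+\mathbf b\mathbf A=0\}$ and commutes with scaling, so it descends to $\widetilde Q^{\mathrm{oct}}=(C\setminus0)/\mathbb R^+$. With $\mathbb R^3\cong\mathrm{Im}(\mathbb H)\cong(\mathbb R^3)^*$, the diffeomorphism $\Phi:S^2\times S^3\to\widetilde Q^{\mathrm{oct}}$ is $\Phi(\mathbf v,q)=\mathbb R^+\begin{pmatrix}\mathrm{Re}(\mathbf vq)&\mathbf v+\mathrm{Im}(\mathbf vq)\\ \mathbf v-\mathrm{Im}(\mathbf vq)&-\mathrm{Re}(\mathbf vq)\end{pmatrix}$, and $X^{\mathrm{roll}}$ is the pullback under $\Phi$ of the descended vector field. Descending means $X^{\mathrm{roll}}$ is invariant under $(\mathbf v,q)\mapsto(\mathbf v,-q)$. *)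

(* Defs.v *)
From HB Require Import structures.
From mathcomp Require Import all_boot all_order all_algebra.
From mathcomp Require Import reals.
Set Implicit Arguments. Unset Strict Implicit. Unset Printing Implicit Defensive.
Import Order.TTheory GRing.Theory Num.Theory.
Local Open Scope ring_scope.

Section Defs.
Variable R : realType.

Definition crossC (a a' : 'cV[R]_3) : 'rV[R]_3 :=
  \row_j \det (row_mx a (row_mx a' (delta_mx j (0 : 'I_1))) : 'M[R]_3).
Definition crossR (b b' : 'rV[R]_3) : 'cV[R]_3 :=
  \col_j \det (col_mx b (col_mx b' (delta_mx (0 : 'I_1) j)) : 'M[R]_3).

Definition sc (m : 'M[R]_1) : R := m 0 0.

(* Im(O): matrices (x A ; b -x), stored as (x, A, b). *)
Record imO := ImO { ox : R; oA : 'cV[R]_3; ob : 'rV[R]_3 }.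
Definition imO_add (u w : imO) : imO :=
  ImO (ox u + ox w) (oA u + oA w) (ob u + ob w).
Definition imO_scale (l : R) (u : imO) : imO :=
  ImO (l * ox u) (l *: oA u) (l *: ob u).

Definition rho (T : 'M[R]_3) (Q : 'cV[R]_3) (p : 'rV[R]_3) (u : imO) : imO :=
  ImO (sc (p *m oA u) + sc (ob u *m Q))
      (T *m oA u - crossR p (ob u) + (2 * ox u) *: Q)
      (crossC Q (oA u) - ob u *m T + (2 * ox u) *: p).

(* Quaternions H = R^4 with Hamilton product; R^3 = Im(H). *)
Record quat := Quat { qa : R; qb : R; qc : R; qd : R }.
Definition qmul (x y : quat) : quat :=
  Quat (qa x * qa y - qb x * qb y - qc x * qc y - qd x * qd y)
       (qa x * qb y + qb x * qa y + qc x * qd y - qd x * qc y)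
       (qa x * qc y - qb x * qd y + qc x * qa y + qd x * qb y)
       (qa x * qd y + qb x * qc y - qc x * qb y + qd x * qa y).
Definition qadd (x y : quat) : quat :=
  Quat (qa x + qa y) (qb x + qb y) (qc x + qc y) (qd x + qd y).
Definition qopp (x : quat) : quat := Quat (- qa x) (- qb x) (- qc x) (- qd x).
Definition qdot (x y : quat) : R :=
  qa x * qa y + qb x * qb y + qc x * qc y + qd x * qd y.
Definition qRe (x : quat) : R := qa x.
Definition qIm (x : quat) : 'cV[R]_3 :=
  \col_i (match val i with 0 => qb x | 1 => qc x | _ => qd x end).
Definition imQ (v : 'cV[R]_3) : quat := Quat 0 (v 0 0) (v 1 0) (v 2 0).

Definition vdot (v w : 'cV[R]_3) : R := sc (v^T *m w).
Definition onS2 (v : 'cV[R]_3) : Prop := vdot v v = 1.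
Definition onS3 (q : quat) : Prop := qdot q q = 1.

(* A representative in the null cone of Phi(v, q) in Q^oct = (C \ 0)/R^+ :
   (Re(vq)  v + Im(vq) ; v - Im(vq)  -Re(vq)). *)
Definition Phi0 (v : 'cV[R]_3) (q : quat) : imO :=
  let w := qmul (imQ v) q in ImO (qRe w) (v + qIm w) (v - qIm w)^T.

(* Derivative of Phi0 at (v, q) in direction (dv, dq): Phi0 is the sum of a
   linear map in v and a bilinear map in (v, q), so this is its differential. *)
Definition dPhi0 (v : 'cV[R]_3) (q : quat) (dv : 'cV[R]_3) (dq : quat) : imO :=
  let w := qadd (qmul (imQ dv) q) (qmul (imQ v) dq) in
  ImO (qRe w) (dv + qIm w) (dv - qIm w)^T.

(* A vector field on S^2 x S^3 (in ambient coordinates R^3 x H). *)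
Definition vfield := 'cV[R]_3 -> quat -> 'cV[R]_3 * quat.

(* X is X^roll: the pullback under Phi of the vector field induced by rho on
   (C \ 0)/R^+.  At every point (v,q) of S^2 x S^3, X(v,q) is tangent to
   S^2 x S^3, and dPhi0 (X(v,q)) agrees with rho(Phi0(v,q)) modulo the
   direction of the ray R^+ Phi0(v,q) (i.e. they agree on the quotient). *)
Definition is_Xroll (T : 'M[R]_3) (Q : 'cV[R]_3) (p : 'rV[R]_3) (X : vfield)
  : Prop :=
  forall v q, onS2 v -> onS3 q ->
    vdot v (X v q).1 = 0 /\ qdot q (X v q).2 = 0 /\
    exists l : R,
      dPhi0 v q (X v q).1 (X v q).2 =
      imO_add (rho T Q p (Phi0 v q)) (imO_scale l (Phi0 v q)).

(* X descends along S^2 x S^3 -> S^2 x SO_3, (v,q) |-> (v, x |-> q x qbar):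
   X is invariant under the deck transformation sigma(v,q) = (v,-q),
   i.e. X(sigma(v,q)) = dsigma(X(v,q)) = (X_1(v,q), -X_2(v,q)). *)
Definition descends_SO3 (X : vfield) : Prop :=
  forall v q, onS2 v -> onS3 q ->
    X v (qopp q) = ((X v q).1, qopp (X v q).2).

End Defs.

(* Main.v *)
Require Import Defs.
From HB Require Import structures.
From mathcomp Require Import all_boot all_order all_algebra.
From mathcomp Require Import reals ring lra.
Import Order.TTheory GRing.Theory Num.Theory.
Local Open Scope ring_scope.
Section S.
Variable R : realType.
Lemma sum3 (F : 'I_3 -> R) : \sum_(i < 3) F i = F 0 + F 1 + F 2.
Proof. rewrite !big_ord_recr big_ord0 /= add0r. congr (F _ + F _ + F _); exact: val_inj. Qed.
Lemma sum2 (F : 'I_2 -> R) : \sum_(i < 2) F i = F 0 + F 1.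
Proof. rewrite !big_ord_recr big_ord0 /= add0r. congr (F _ + F _); exact: val_inj. Qed.
Lemma det2 (M : 'M[R]_2) : \det M = M 0 0 * M 1 1 - M 0 1 * M 1 0.
Proof.
rewrite (expand_det_row _ 0) sum2 /cofactor !det_mx11 !mxE /=.
have -> : lift 0 (0:'I_1) = 1 :> 'I_2 by apply: val_inj.
have -> : lift 1 (0:'I_1) = 0 :> 'I_2 by apply: val_inj.
rewrite expr0 expr1. ring.
Qed.
Lemma det3 (M : 'M[R]_3) : \det M =
  M 0 0 * (M 1 1 * M 2 2 - M 1 2 * M 2 1)
  - M 0 1 * (M 1 0 * M 2 2 - M 1 2 * M 2 0)
  + M 0 2 * (M 1 0 * M 2 1 - M 1 1 * M 2 0).
Proof.
rewrite (expand_det_row _ 0) sum3 /cofactor !det2 !mxE /=.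
have -> : lift 0 (0:'I_2) = 1 :> 'I_3 by apply: val_inj.
have -> : lift 0 (1:'I_2) = 2 :> 'I_3 by apply: val_inj.
have -> : lift 1 (0:'I_2) = 0 :> 'I_3 by apply: val_inj.
have -> : lift 1 (1:'I_2) = 2 :> 'I_3 by apply: val_inj.
have -> : lift 2 (0:'I_2) = 0 :> 'I_3 by apply: val_inj.
have -> : lift 2 (1:'I_2) = 1 :> 'I_3 by apply: val_inj.
rewrite !exprS expr0. ring.
Qed.
Lemma rm3E (a a' d : 'cV[R]_3) i :
  (row_mx a (row_mx a' d) : 'M_3) i 0 = a i 0 /\
  (row_mx a (row_mx a' d) : 'M_3) i 1 = a' i 0 /\
  (row_mx a (row_mx a' d) : 'M_3) i 2 = d i 0.
Proof.
have c0 : (0 : 'I_3) = lshift (1+1) (0:'I_1) by apply: val_inj.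
have c1 : (1 : 'I_3) = rshift 1 (lshift 1 (0:'I_1)) by apply: val_inj.
have c2 : (2 : 'I_3) = rshift 1 (rshift 1 (0:'I_1)) by apply: val_inj.
rewrite c2 c1 c0. split; first exact: row_mxEl. split.
  by transitivity (row_mx a' d i (lshift 1 0)); [exact: row_mxEr | exact: row_mxEl].
by transitivity (row_mx a' d i (rshift 1 0)); [exact: row_mxEr | exact: row_mxEr].
Qed.
Lemma cm3E (a a' d : 'rV[R]_3) i :
  (col_mx a (col_mx a' d) : 'M_3) 0 i = a 0 i /\
  (col_mx a (col_mx a' d) : 'M_3) 1 i = a' 0 i /\
  (col_mx a (col_mx a' d) : 'M_3) 2 i = d 0 i.
Proof.
have c0 : (0 : 'I_3) = lshift (1+1) (0:'I_1) by apply: val_inj.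
have c1 : (1 : 'I_3) = rshift 1 (lshift 1 (0:'I_1)) by apply: val_inj.
have c2 : (2 : 'I_3) = rshift 1 (rshift 1 (0:'I_1)) by apply: val_inj.
rewrite c2 c1 c0. split; first exact: col_mxEu. split.
  by transitivity (col_mx a' d (lshift 1 0) i); [exact: col_mxEd | exact: col_mxEu].
by transitivity (col_mx a' d (rshift 1 0) i); [exact: col_mxEd | exact: col_mxEd].
Qed.
Definition cr3 (a0 a1 a2 b0 b1 b2 : R) (j : 'I_3) : R :=
  nth 0 [:: a1 * b2 - a2 * b1; a2 * b0 - a0 * b2; a0 * b1 - a1 * b0] j.
Lemma crossC_def (a a' : 'cV[R]_3) :
  crossC a a' = \row_j cr3 (a 0 0) (a 1 0) (a 2 0) (a' 0 0) (a' 1 0) (a' 2 0) j.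
Proof.
apply/matrixP => i j; rewrite !mxE det3.
rewrite !(proj1 (rm3E _ _ _ _)) !(proj1 (proj2 (rm3E _ _ _ _))) !(proj2 (proj2 (rm3E _ _ _ _))) !mxE /=.
case: j => [[|[|[|//]]] Hj] /=; rewrite /cr3 /=; ring.
Qed.
Lemma crossR_def (a a' : 'rV[R]_3) :
  crossR a a' = \col_j cr3 (a 0 0) (a 0 1) (a 0 2) (a' 0 0) (a' 0 1) (a' 0 2) j.
Proof.
apply/matrixP => j i; rewrite !mxE det3.
rewrite !(proj1 (cm3E _ _ _ _)) !(proj1 (proj2 (cm3E _ _ _ _))) !(proj2 (proj2 (cm3E _ _ _ _))) !mxE /=.
case: j => [[|[|[|//]]] Hj] /=; rewrite /cr3 /=; ring.
Qed.

Definition tau (u : imO R) : imO R := ImO (- ox u) (ob u)^T (oA u)^T.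

Lemma cV3P (A B : 'cV[R]_3) : A 0 0 = B 0 0 -> A 1 0 = B 1 0 -> A 2 0 = B 2 0 -> A = B.
Proof.
move=> h0 h1 h2; apply/matrixP => i j; rewrite ord1.
case: i => [[|[|[|//]]] Hi].
- by rewrite (_ : Ordinal Hi = 0) //; apply: val_inj.
- by rewrite (_ : Ordinal Hi = 1) //; apply: val_inj.
- by rewrite (_ : Ordinal Hi = 2) //; apply: val_inj.
Qed.
Lemma rV3P (A B : 'rV[R]_3) : A 0 0 = B 0 0 -> A 0 1 = B 0 1 -> A 0 2 = B 0 2 -> A = B.
Proof.
move=> h0 h1 h2; apply/matrixP => j i; rewrite ord1.
case: i => [[|[|[|//]]] Hi].
- by rewrite (_ : Ordinal Hi = 0) //; apply: val_inj.
- by rewrite (_ : Ordinal Hi = 1) //; apply: val_inj.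
- by rewrite (_ : Ordinal Hi = 2) //; apply: val_inj.
Qed.
Lemma M3P (A B : 'M[R]_3) : A 0 0 = B 0 0 -> A 0 1 = B 0 1 -> A 0 2 = B 0 2 ->
  A 1 0 = B 1 0 -> A 1 1 = B 1 1 -> A 1 2 = B 1 2 ->
  A 2 0 = B 2 0 -> A 2 1 = B 2 1 -> A 2 2 = B 2 2 -> A = B.
Proof.
move=> h00 h01 h02 h10 h11 h12 h20 h21 h22; apply/matrixP => i j.
have E : forall k : 'I_3, k = 0 \/ k = 1 \/ k = 2.
  case=> [[|[|[|//]]] Hk]; [left|right; left|right; right]; exact: val_inj.
by case: (E i) => [->|[->|->]]; case: (E j) => [->|[->|->]].
Qed.
Lemma imO_split (u w : imO R) : u = w ->
  ox u = ox w /\ oA u 0 0 = oA w 0 0 /\ oA u 1 0 = oA w 1 0 /\ oA u 2 0 = oA w 2 0 /\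
      ob u 0 0 = ob w 0 0 /\ ob u 0 1 = ob w 0 1 /\ ob u 0 2 = ob w 0 2.
Proof. by move=> ->; do !split. Qed.
Lemma imO_join (u w : imO R) :
  ox u = ox w -> oA u 0 0 = oA w 0 0 -> oA u 1 0 = oA w 1 0 -> oA u 2 0 = oA w 2 0 ->
  ob u 0 0 = ob w 0 0 -> ob u 0 1 = ob w 0 1 -> ob u 0 2 = ob w 0 2 -> u = w.
Proof.
case: u => x A b; case: w => x' A' b' /= h1 h2 h3 h4 h5 h6 h7.
by rewrite h1 (@cV3P A A' h2 h3 h4) (@rV3P b b' h5 h6 h7).
Qed.

Ltac simp := unfold Phi0, dPhi0, rho, tau, imO_add, imO_scale, sc, qIm; simpl;
  rewrite ?crossC_def ?crossR_def /=; rewrite ?(mxE, sum3) /cr3 /=.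
Ltac simpS := unfold onS2, onS3, vdot, qdot; simp.

Lemma I1 v q : Phi0 v (qopp q) = tau (Phi0 v q).
Proof. apply: imO_join; simp; ring. Qed.
Lemma I2 v q dv dq : dPhi0 v (qopp q) dv (qopp dq) = tau (dPhi0 v q dv dq).
Proof. apply: imO_join; simp; ring. Qed.
Lemma I3 T Q p u : T^T = - T -> Q = - p^T -> rho T Q p (tau u) = tau (rho T Q p u).
Proof.
move=> hT ->.
have e : forall i j, T j i = - T i j by move=> i j; have := congr1 (fun M : 'M_3 => M i j) hT; rewrite !mxE.
have d : forall i, T i i = 0 by move=> i; have := e i i; lra.
apply: imO_join; simp; rewrite ?(e 0 1) ?(e 0 2) ?(e 1 2) ?d; ring.
Qed.

Lemma U (v : 'cV[R]_3) (q : quat R) (dv1 : 'cV[R]_3) (dq1 : quat R) (dv2 : 'cV[R]_3) (dq2 : quat R) (W : imO R) (l1 l2 : R) : onS2 v -> vdot v dv1 = 0 -> vdot v dv2 = 0 ->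
  dPhi0 v q dv1 dq1 = imO_add W (imO_scale l1 (Phi0 v q)) ->
  dPhi0 v q dv2 dq2 = imO_add W (imO_scale l2 (Phi0 v q)) -> dv1 = dv2 /\ dq1 = dq2.
Proof.
move=> hS hv1 hv2 /imO_split[a1 [a2 [a3 [a4 [a5 [a6 a7]]]]]] /imO_split[b1 [b2 [b3 [b4 [b5 [b6 b7]]]]]].
move: hS hv1 hv2 a1 a2 a3 a4 a5 a6 a7 b1 b2 b3 b4 b5 b6 b7; simpS.
move=> hS hv1 hv2 a1 a2 a3 a4 a5 a6 a7 b1 b2 b3 b4 b5 b6 b7.
have hd0 : dv1 0 0 - dv2 0 0 = (l1 - l2) * v 0 0 by lra.
have hd1 : dv1 1 0 - dv2 1 0 = (l1 - l2) * v 1 0 by lra.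
have hd2 : dv1 2 0 - dv2 2 0 = (l1 - l2) * v 2 0 by lra.
have hm : l1 - l2 = 0.
  have -> : l1 - l2 = v 0 0 * ((l1 - l2) * v 0 0) + v 1 0 * ((l1 - l2) * v 1 0)
     + v 2 0 * ((l1 - l2) * v 2 0).
    by rewrite -[LHS]mulr1 -hS; ring.
  rewrite -hd0 -hd1 -hd2; lra.
have e2 : l2 = l1 by lra.
rewrite e2 in b1 b2 b3 b4 b5 b6 b7.
have f0 : dv2 0 0 = dv1 0 0 by nra.
have f1 : dv2 1 0 = dv1 1 0 by nra.
have f2 : dv2 2 0 = dv1 2 0 by nra.
rewrite f0 f1 f2 in b1 b2 b3 b4 b5 b6 b7.
set e0 := qa dq1 - qa dq2. set e1 := qb dq1 - qb dq2.
set e3 := qc dq1 - qc dq2. set e4 := qd dq1 - qd dq2.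
have ya : - (v 0 0 * e1 + v 1 0 * e3 + v 2 0 * e4) = 0 by rewrite /e0 /e1 /e3 /e4; lra.
have yb : v 0 0 * e0 + v 1 0 * e4 - v 2 0 * e3 = 0 by rewrite /e0 /e1 /e3 /e4; lra.
have yc : - v 0 0 * e4 + v 1 0 * e0 + v 2 0 * e1 = 0 by rewrite /e0 /e1 /e3 /e4; lra.
have yd : v 0 0 * e3 - v 1 0 * e1 + v 2 0 * e0 = 0 by rewrite /e0 /e1 /e3 /e4; lra.
have z0 : e0 = 0.
  rewrite -[e0]mulr1 -hS.
  have -> : e0 * (v 0 0 * v 0 0 + v 1 0 * v 1 0 + v 2 0 * v 2 0) =
    v 0 0 * (v 0 0 * e0 + v 1 0 * e4 - v 2 0 * e3) + v 1 0 * (- v 0 0 * e4 + v 1 0 * e0 + v 2 0 * e1)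
    + v 2 0 * (v 0 0 * e3 - v 1 0 * e1 + v 2 0 * e0) by ring.
  by rewrite yb yc yd; ring.
have z1 : e1 = 0.
  rewrite -[e1]mulr1 -hS.
  have -> : e1 * (v 0 0 * v 0 0 + v 1 0 * v 1 0 + v 2 0 * v 2 0) = - v 0 0 * (- (v 0 0 * e1 + v 1 0 * e3 + v 2 0 * e4)) - v 1 0 * (v 0 0 * e3 - v 1 0 * e1 + v 2 0 * e0) + v 2 0 * (- v 0 0 * e4 + v 1 0 * e0 + v 2 0 * e1) by rewrite /e0 /e1 /e3 /e4; ring.
  by rewrite ?ya ?yb ?yc ?yd; ring.
have z3 : e3 = 0.
  rewrite -[e3]mulr1 -hS.
  have -> : e3 * (v 0 0 * v 0 0 + v 1 0 * v 1 0 + v 2 0 * v 2 0) = v 0 0 * (v 0 0 * e3 - v 1 0 * e1 + v 2 0 * e0) - v 1 0 * (- (v 0 0 * e1 + v 1 0 * e3 + v 2 0 * e4)) - v 2 0 * (v 0 0 * e0 + v 1 0 * e4 - v 2 0 * e3) by rewrite /e0 /e1 /e3 /e4; ring.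
  by rewrite ?ya ?yb ?yc ?yd; ring.
have z4 : e4 = 0.
  rewrite -[e4]mulr1 -hS.
  have -> : e4 * (v 0 0 * v 0 0 + v 1 0 * v 1 0 + v 2 0 * v 2 0) = - v 0 0 * (- v 0 0 * e4 + v 1 0 * e0 + v 2 0 * e1) + v 1 0 * (v 0 0 * e0 + v 1 0 * e4 - v 2 0 * e3) - v 2 0 * (- (v 0 0 * e1 + v 1 0 * e3 + v 2 0 * e4)) by rewrite /e0 /e1 /e3 /e4; ring.
  by rewrite ?ya ?yb ?yc ?yd; ring.
split; first by apply: cV3P; rewrite ?f0 ?f1 ?f2.
move: z0 z1 z3 z4; rewrite /e0 /e1 /e3 /e4; clear -R.
move=> h0 h1 h3 h4; move: dq1 dq2 h0 h1 h3 h4.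
case=> a b c d [a' b' c' d'] /= h0 h1 h3 h4.
congr Quat; lra.
Qed.

Lemma tau_lin (a b : imO R) l : tau (imO_add a (imO_scale l b)) = imO_add (tau a) (imO_scale l (tau b)).
Proof. apply: imO_join; simp; ring. Qed.
Lemma S3opp (q : quat R) : onS3 q -> onS3 (qopp q).
Proof. rewrite /onS3 /qdot /qopp /= => <-; ring. Qed.

Lemma onlyif (T : 'M[R]_3) (Q : 'cV[R]_3) (p : 'rV[R]_3) :
  (forall v q, onS2 v -> onS3 q -> exists l l',
    tau (imO_add (rho T Q p (Phi0 v q)) (imO_scale l (Phi0 v q))) =
    imO_add (rho T Q p (tau (Phi0 v q))) (imO_scale l' (tau (Phi0 v q)))) ->
  T^T = - T /\ Q = - p^T.
Proof.
move=> K.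
have S0 : onS2 (delta_mx 0 0 : 'cV[R]_3) by simpS; lra.
have S1 : onS2 (delta_mx 1 0 : 'cV[R]_3) by simpS; lra.
have S2 : onS2 (delta_mx 2 0 : 'cV[R]_3) by simpS; lra.
have Q1 : onS3 (Quat 1 0 0 0 : quat R) by simpS; lra.
have Qi : onS3 (Quat 0 1 0 0 : quat R) by simpS; lra.
have Qj : onS3 (Quat 0 0 1 0 : quat R) by simpS; lra.
have Qk : onS3 (Quat 0 0 0 1 : quat R) by simpS; lra.
have [l0 [l0' /imO_split[a0 _]]] := K _ _ S0 Q1.
have [l1 [l1' /imO_split[a1 _]]] := K _ _ S1 Q1.
have [l2 [l2' /imO_split[a2 _]]] := K _ _ S2 Q1.
have [m0 [m0' /imO_split[b0 [c0 [d0 [e0 _]]]]]] := K _ _ S0 Qi.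
have [m1 [m1' /imO_split[b1 [c1 [d1 [e1 _]]]]]] := K _ _ S1 Qj.
have [m2 [m2' /imO_split[b2 [c2 [d2 [e2 _]]]]]] := K _ _ S2 Qk.
move: a0; simp => a0.
move: a1; simp => a1.
move: a2; simp => a2.
move: b0; simp => b0.
move: c0; simp => c0.
move: d0; simp => d0.
move: e0; simp => e0.
move: b1; simp => b1.
move: c1; simp => c1.
move: d1; simp => d1.
move: e1; simp => e1.
move: b2; simp => b2.
move: c2; simp => c2.
move: d2; simp => d2.
move: e2; simp => e2.
clear K.
have q0 : Q 0 0 = - p 0 0 by clear -a0; lra.
have q1 : Q 1 0 = - p 0 1 by clear -a1; lra.
have q2 : Q 2 0 = - p 0 2 by clear -a2; lra.
rewrite q0 q1 q2 in b0 c0 d0 e0 b1 c1 d1 e1 b2 c2 d2 e2.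
have n0 : m0 = m0' by clear -b0; lra.
have n1 : m1 = m1' by clear -b1; lra.
have n2 : m2 = m2' by clear -b2; lra.
rewrite n0 in c0 d0 e0; rewrite n1 in c1 d1 e1; rewrite n2 in c2 d2 e2.
have t0 : T 0 0 = - T 0 0 /\ T 1 0 = - T 0 1 /\ T 2 0 = - T 0 2.
  by clear -c0 d0 e0; split; [lra | split; lra].
have t1 : T 0 1 = - T 1 0 /\ T 1 1 = - T 1 1 /\ T 2 1 = - T 1 2.
  by clear -c1 d1 e1; split; [lra | split; lra].
have t2 : T 0 2 = - T 2 0 /\ T 1 2 = - T 2 1 /\ T 2 2 = - T 2 2.
  by clear -c2 d2 e2; split; [lra | split; lra].
split; last by apply: cV3P; rewrite !mxE.
clear -t0 t1 t2; apply: M3P; rewrite !mxE; lra.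
Qed.
End S.
Arguments tau {R}. Arguments tau_lin {R}. Arguments S3opp {R q}. Arguments U {R v q dv1 dq1 dv2 dq2 W l1 l2}. Arguments onlyif {R}. Arguments I1 {R}. Arguments I2 {R}. Arguments I3 {R}.

Theorem proposition8 (R : realType) (T : 'M[R]_3) (Q : 'cV[R]_3)
  (p : 'rV[R]_3) (X : vfield R) :
  \tr T = 0 ->
  is_Xroll T Q p X ->
  (descends_SO3 X <-> (T^T = - T /\ Q = - p^T)).
Proof.
move=> htr hX; split; last first.
  move=> [hT hQ] v q hv hq.
  have [t1 [t2 [l eq1]]] := hX v q hv hq.
  have [t1' [t2' [l' eq2]]] := hX v (qopp q) hv (S3opp hq).
  have eq3 : dPhi0 v (qopp q) (X v q).1 (qopp (X v q).2) =
     imO_add (rho T Q p (Phi0 v (qopp q))) (imO_scale l (Phi0 v (qopp q))).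
    by rewrite I2 eq1 tau_lin I1 I3.
  have [e1 e2] := U hv t1' t1 eq2 eq3.
  by rewrite [X v (qopp q)]surjective_pairing e1 e2.
move=> hD.
have K : forall v q, onS2 v -> onS3 q -> exists l l',
    tau (imO_add (rho T Q p (Phi0 v q)) (imO_scale l (Phi0 v q))) =
    imO_add (rho T Q p (tau (Phi0 v q))) (imO_scale l' (tau (Phi0 v q))).
  move=> v q hv hq.
  have [_ [_ [l eq1]]] := hX v q hv hq.
  have [_ [_ [l' eq2]]] := hX v (qopp q) hv (S3opp hq).
  rewrite hD //= I2 eq1 I1 in eq2.
  by exists l, l'.
exact: onlyif.
Qed.
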